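(* Let $C_{11}(\{1,3\})$ be the circulant graph with vertex set $\mathbb Z_{11}$ in which $i$ and $j$ are adjacent iff $i-j\equiv \pm1$ or $\pm 3 \pmod{11}$, and let $G_{22}$ be the complement of the line graph $L(C_{11}(\{1,3\}))$. Then $G_{22}$ is not co-triangle, i.e., $L(C_{11}(\{1,3\}))$ is not a triangle graph.
   Context: A graph $G$ is triangle if for every maximal stable set $S$ of $G$ and every edge $uv$ of $G$ with $u,v\notin S$, there is $s\in S$ adjacent to both $u$ and $v$. The line graph $L(H)$ has vertex set $E(H)$, with two edges adjacent iff they share an endpoint. *)

(* Defs.v *)
From mathcomp Require Import all_boot all_order all_algebra.
Set Implicit Arguments. Unset Strict Implicit. Unset Printing Implicit Defensive.
Import GRing.Theory.

(* Graphs: a finite simple graph is given by a vertex finType V and an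
   adjacency relation adj : rel V (assumed symmetric and irreflexive). *)

Section Graphs.
Variables (V : finType) (adj : rel V).

Definition stable (S : {set V}) : Prop :=
  forall u v, u \in S -> v \in S -> ~~ adj u v.

Definition maximal_stable (S : {set V}) : Prop :=
  stable S /\ forall T : {set V}, S \subset T -> stable T -> T = S.

Definition triangle_graph : Prop :=
  forall S : {set V}, maximal_stable S ->
  forall u v, adj u v -> u \notin S -> v \notin S ->
  exists s, [/\ s \in S, adj s u & adj s v].

Definition is_edge (E : {set V}) : bool :=
  [exists x, exists y, [&& x != y, adj x y & E == [set x; y]]].

End Graphs.

Definition line_vertex (V : finType) (adj : rel V) :=
  {E : {set V} | is_edge adj E}.

Definition line_adj (V : finType) (adj : rel V) : rel (line_vertex adj) :=
  fun e f => (e != f) && ~~ [disjoint val e & val f].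

Arguments line_adj {V} adj.
Arguments triangle_graph {V} adj.

Definition C11_13_adj : rel 'Z_11 :=
  fun i j => ((i - j \in [:: 1; -1; 3%:R; - 3%:R])%R).

(* Main.v *)
Require Import Defs.
From mathcomp Require Import all_boot all_order all_algebra.

Notation z n := (inZp n : 'Z_11).
Notation LV := (line_vertex C11_13_adj).

Lemma edgeP (a b : 'Z_11) : a != b -> C11_13_adj a b -> is_edge C11_13_adj [set a; b].
Proof.
move=> H1 H2; apply/existsP; exists a; apply/existsP; exists b.
by rewrite H1 H2 eqxx.
Qed.

Lemma e01 : is_edge C11_13_adj [set z 0; z 1].
Proof. by apply: edgeP. Qed.

Definition d0 : LV := exist (fun E => is_edge C11_13_adj E) _ e01.

Fact mk_key : unit. Proof. by []. Qed.
Definition mk : nat -> nat -> LV :=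
  locked_with mk_key (fun a b => insubd d0 [set z a; z b]).

Lemma val_mk a b : z a != z b -> C11_13_adj (z a) (z b) ->
  val (mk a b) = [set z a; z b].
Proof. by move=> H1 H2; rewrite /mk unlock insubdK //; apply: edgeP. Qed.

Lemma disjE (a b c d : 'Z_11) : [disjoint [set a; b] & [set c; d]] =
  [&& a != c, a != d, b != c & b != d].
Proof. by rewrite disjoints_subset subUset !sub1set !inE !negb_or -!andbA. Qed.

Lemma mkneq a b c d : z a != z b -> C11_13_adj (z a) (z b) ->
  z c != z d -> C11_13_adj (z c) (z d) ->
  ~~ ((z a \in [set z c; z d]) && (z b \in [set z c; z d])) -> (mk a b == mk c d) = false.
Proof.
move=> h1 h2 h3 h4 H; apply/negbTE/eqP => /(congr1 val); rewrite !val_mk // => E.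
by move: H; rewrite -E !inE !eqxx orbT.
Qed.

Definition Sm : {set LV} := [set mk 1 2; mk 3 4; mk 5 6; mk 7 8; mk 9 10].

Lemma cover (w : 'Z_11) : w != 0%R -> exists2 s, s \in Sm & w \in val s.
Proof.
case: w => [[|[|[|[|[|[|[|[|[|[|[|//]]]]]]]]]]] Hm] // _.
- by exists (mk 1 2); [rewrite !inE eqxx ?orbT | rewrite val_mk // !inE].
- by exists (mk 1 2); [rewrite !inE eqxx ?orbT | rewrite val_mk // !inE].
- by exists (mk 3 4); [rewrite !inE eqxx ?orbT | rewrite val_mk // !inE].
- by exists (mk 3 4); [rewrite !inE eqxx ?orbT | rewrite val_mk // !inE].
- by exists (mk 5 6); [rewrite !inE eqxx ?orbT | rewrite val_mk // !inE].
- by exists (mk 5 6); [rewrite !inE eqxx ?orbT | rewrite val_mk // !inE].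
- by exists (mk 7 8); [rewrite !inE eqxx ?orbT | rewrite val_mk // !inE].
- by exists (mk 7 8); [rewrite !inE eqxx ?orbT | rewrite val_mk // !inE].
- by exists (mk 9 10); [rewrite !inE eqxx ?orbT | rewrite val_mk // !inE].
- by exists (mk 9 10); [rewrite !inE eqxx ?orbT | rewrite val_mk // !inE].
Qed.

Lemma SmP u : u \in Sm ->
  u = mk 1 2 \/ u = mk 3 4 \/ u = mk 5 6 \/ u = mk 7 8 \/ u = mk 9 10.
Proof.
rewrite !inE => H; repeat case/orP: H => H; move/eqP: H => ->;
  by do ?[left; reflexivity | right].
Qed.

Lemma Sm_stable : stable (line_adj C11_13_adj) Sm.
Proof.
move=> u v; case/SmP=> [->|[->|[->|[->|->]]]] ; case/SmP=> [->|[->|[->|[->|->]]]] ;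
  first [by rewrite /line_adj eqxx | by rewrite /line_adj !val_mk // disjE ?andbF].
Qed.

Lemma Sm_max : maximal_stable (line_adj C11_13_adj) Sm.
Proof.
split; first exact: Sm_stable.
move=> T sST stT; apply/eqP; rewrite eqEsubset sST andbT.
apply/subsetP => t Ht; apply/negPn/negP => HtS.
have := valP t => /existsP[x /existsP[y /and3P[nxy axy /eqP Et]]].
pose w := if x == 0%R then y else x.
have w0 : w != 0%R by rewrite /w; case: (eqVneq x 0%R) => [E|//]; by rewrite -E eq_sym.
have wt : w \in val t by rewrite Et /w !inE; case: (eqVneq x 0%R) => _; rewrite eqxx ?orbT.
have [s Hs ws] := @cover w w0.
have := stT s t (subsetP sST s Hs) Ht.
rewrite /line_adj; apply/negP/negPn; apply/andP; split.
  by apply/eqP => st; rewrite -st Hs in HtS.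
by apply/negP => D; rewrite (disjointFr D ws) in wt.
Qed.

Theorem proposition37 : ~ triangle_graph (line_adj C11_13_adj).
Proof.
move=> H.
have Hadj : line_adj C11_13_adj (mk 0 1) (mk 0 3).
  rewrite /line_adj mkneq ?inE // !val_mk //.
  by rewrite disjE.
have Hu : mk 0 1 \notin Sm by rewrite !inE !mkneq ?inE.
have Hv : mk 0 3 \notin Sm by rewrite !inE !mkneq ?inE.
have [s [Hs H1 H2]] := H Sm Sm_max _ _ Hadj Hu Hv.
move: H1 H2; case/SmP: Hs => [->|[->|[->|[->|->]]]] /andP[_ +] /andP[_ +];
  by rewrite !val_mk // !disjE.
Qed.
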